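(* Let $G$ be a (Hausdorff) topological group. Then: (1) $G$ is a cosmic space if and only if $G$ is separable and has countable $cn$-character; (2) $G$ is an $\aleph_0$-space if and only if $G$ is separable and has countable $ck$-character; (3) $G$ is a $\mathcal{P}_0$-space if and only if $G$ is separable and has countable $cp$-character.
   Context: All spaces are Hausdorff. A family $\mathcal{N}$ of subsets of a space $X$ is a network if whenever $x\in U$ with $U$ open, $x\in N\subseteq U$ for some $N\in\mathcal{N}$; it is a $k$-network if whenever $K\subseteq U$ with $K$ compact and $U$ open, $K\subseteq\bigcup\mathcal{F}\subseteq U$ for some finite $\mathcal{F}\subseteq\mathcal{N}$. A space is cosmic if it is regular with a countable network, and an $\aleph_0$-space if it is regular with a countable $k$-network. Let $x\in X$. A family $\mathcal{N}$ of subsets of $X$ is: - a $cn$-network at $x$ if for each neighborhood $O_x$ of $x$ the set $\bigcup\{N\in\mathcal{N}: x\in N\subseteq O_x\}$ is a neighborhood of $x$; - a $ck$-network at $x$ if for every neighborhood $O_x$ of $x$ there is a neighborhood $U_x$ of $x$ such that for each compact $K\subseteq U_x$ there is a finite $\mathcal{F}\subseteq\mathcal{N}$ with $x\in\bigcap\mathcal{F}$ and $K\subseteq\bigcup\mathcal{F}\subseteq O_x$; - a $cp$-network at $x$ if for every neighborhood $O_x$ of $x$ there is $N\in\mathcal{N}$ with $x\in N\subseteq O_x$, and for every $A\subseteq X$ with $x\in\overline{A}\setminus A$ and every neighborhood $O_x$ of $x$ there is $N\in\mathcal{N}$ with $x\in N\subseteq O_x$ and $N\cap A$ infinite. A family is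 a $cn$-, $ck$-, $cp$-network in $X$ if it is one at every point of $X$. For $\mathfrak{n}\in\{cn,ck,cp\}$, the $\mathfrak{n}$-character of $X$ at $x$ is the least cardinality of an $\mathfrak{n}$-network at $x$, and the $\mathfrak{n}$-character of $X$ is the supremum over $x\in X$. A $\mathcal{P}_0$-space is a regular space admitting a countable $cp$-network (a countable family which is a $cp$-network at every point). *)

(* Defs.v *)
From Stdlib Require Import List Classical.
Import ListNotations.

Set Implicit Arguments.

Definition set (T : Type) := T -> Prop.
Definition subset {T} (A B : set T) : Prop := forall x, A x -> B x.

(* A (possibly empty or finite) set is countable iff it injects into nat. *)
Definition countable {X : Type} (A : set X) : Prop :=
  exists f : X -> nat, forall x y, A x -> A y -> f x = f y -> x = y.
Definition finite_set {X : Type} (A : set X) : Prop :=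
  exists l : list X, forall x, A x -> In x l.
Definition infinite_set {X : Type} (A : set X) : Prop := ~ finite_set A.

Record topology (T : Type) := Topology {
  is_open : set T -> Prop;
  open_full : is_open (fun _ => True);
  open_inter : forall U V, is_open U -> is_open V -> is_open (fun x => U x /\ V x);
  open_union : forall F : set (set T), (forall U, F U -> is_open U) ->
                 is_open (fun x => exists U, F U /\ U x)
}.

Section Topo.
Context {T : Type} (tau : topology T).

Definition nbhd (x : T) (N : set T) : Prop :=
  exists U, is_open tau U /\ U x /\ subset U N.

Definition closure (A : set T) : set T :=
  fun x => forall U, is_open tau U -> U x -> exists y, U y /\ A y.

Definition hausdorff : Prop :=
  forall x y, x <> y -> exists U V, is_open tau U /\ is_open tau V /\ U x /\ V y /\
     (forall z, U z -> V z -> False).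

Definition regular : Prop :=
  forall x U, is_open tau U -> U x ->
    exists V, is_open tau V /\ V x /\ subset (closure V) U.

Definition compact (K : set T) : Prop :=
  forall F : set (set T), (forall U, F U -> is_open tau U) ->
    subset K (fun x => exists U, F U /\ U x) ->
    exists l : list (set T), (forall U, In U l -> F U) /\
      subset K (fun x => exists U, In U l /\ U x).

Definition dense (D : set T) : Prop := forall x, closure D x.
Definition separable : Prop := exists D, countable D /\ dense D.

Definition lunion (l : list (set T)) : set T := fun x => exists N, In N l /\ N x.

Definition network (Nf : set (set T)) : Prop :=
  forall x U, is_open tau U -> U x -> exists N, Nf N /\ N x /\ subset N U.

Definition k_network (Nf : set (set T)) : Prop :=
  forall K U, compact K -> is_open tau U -> subset K U ->
    exists l : list (set T), (forall N, In N l -> Nf N) /\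
      subset K (lunion l) /\ subset (lunion l) U.

Definition cosmic : Prop :=
  regular /\ exists Nf, countable Nf /\ network Nf.

Definition aleph0_space : Prop :=
  regular /\ exists Nf, countable Nf /\ k_network Nf.

Definition cn_network_at (Nf : set (set T)) (x : T) : Prop :=
  forall O, nbhd x O ->
    nbhd x (fun y => exists N, Nf N /\ N x /\ subset N O /\ N y).

Definition ck_network_at (Nf : set (set T)) (x : T) : Prop :=
  forall O, nbhd x O -> exists U, nbhd x U /\
    forall K, compact K -> subset K U ->
      exists l : list (set T), (forall N, In N l -> Nf N) /\
        (forall N, In N l -> N x) /\
        subset K (lunion l) /\ subset (lunion l) O.

Definition cp_network_at (Nf : set (set T)) (x : T) : Prop :=
  (forall O, nbhd x O -> exists N, Nf N /\ N x /\ subset N O) /\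
  (forall A : set T, closure A x -> ~ A x -> forall O, nbhd x O ->
     exists N, Nf N /\ N x /\ subset N O /\ infinite_set (fun y => N y /\ A y)).

(* The n-character of X is countable iff at every point there is a countable
   n-network at that point (sup of cardinals <= aleph_0 iff each is). *)
Definition countable_cn_character : Prop :=
  forall x, exists Nf, countable Nf /\ cn_network_at Nf x.
Definition countable_ck_character : Prop :=
  forall x, exists Nf, countable Nf /\ ck_network_at Nf x.
Definition countable_cp_character : Prop :=
  forall x, exists Nf, countable Nf /\ cp_network_at Nf x.

Definition P0_space : Prop :=
  regular /\ exists Nf, countable Nf /\ forall x, cp_network_at Nf x.

End Topo.

Record topological_group {T : Type} (tau : topology T) := TopGroup {
  gmul : T -> T -> T;
  ginv : T -> T;
  gone : T;
  gmulA : forall x y z, gmul x (gmul y z) = gmul (gmul x y) z;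
  gmul1l : forall x, gmul gone x = x;
  gmulVl : forall x, gmul (ginv x) x = gone;
  (* multiplication continuous as a map T x T -> T (product topology) *)
  gmul_cont : forall x y W, is_open tau W -> W (gmul x y) ->
    exists U V, is_open tau U /\ is_open tau V /\ U x /\ V y /\
      (forall u v, U u -> V v -> W (gmul u v));
  ginv_cont : forall W, is_open tau W -> is_open tau (fun x => W (ginv x))
}.

(* Main.v *)
Require Import Defs.
From Stdlib Require Import List Classical ClassicalEpsilon FunctionalExtensionality PropExtensionality Cantor.
Import ListNotations.


Section Gen.
Context {T : Type} (tau : topology T).

Lemma set_ext (A B : set T) : (forall x, A x <-> B x) -> A = B.
Proof. intro H; apply functional_extensionality; intro x; apply propositional_extensionality; auto. Qed.

Lemma open_of_pts (S : set T) :
  (forall x, S x -> exists U, is_open tau U /\ U x /\ subset U S) -> is_open tau S.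
Proof.
  intro H.
  assert (E : S = (fun x => exists U, (fun U => is_open tau U /\ subset U S) U /\ U x)).
  { apply set_ext; intro x; split.
    - intro Sx; destruct (H x Sx) as (U & HU & Ux & sub); exists U; auto.
    - intros (U & (_ & sub) & Ux); auto. }
  rewrite E; apply open_union; intros U []; auto.
Qed.

Lemma nbhd_open (U : set T) x : is_open tau U -> U x -> nbhd tau x U.
Proof. intros; exists U; repeat split; auto. intros y h; exact h. Qed.

Lemma closure_closed (P : set T) : is_open tau (fun y => ~ closure tau P y).
Proof.
  apply open_of_pts; intros y ny.
  unfold closure in ny. apply not_all_ex_not in ny as [U hU].
  apply imply_to_and in hU as [oU hU]. apply imply_to_and in hU as [Uy hU].
  exists U; split; [auto|split;[auto|]].
  intros z Uz cz. destruct (cz U oU Uz) as [w [Uw Pw]]. apply hU; eauto.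
Qed.

Lemma closure_sub (P : set T) : subset P (closure tau P).
Proof. intros x Px U _ Ux; eauto. Qed.

Lemma list_filter (F : set (set T)) (Z : set T) (l : list (set T)) :
  (forall U, In U l -> F U \/ U = Z) ->
  exists l', (forall U, In U l' -> F U) /\
    forall y, lunion l y -> lunion l' y \/ Z y.
Proof.
  induction l as [|U l IH]; intro H.
  - exists []; split; [intros _ []|]. intros y (N & [] & _).
  - destruct IH as (l' & H1 & H2). { intros V hV; apply H; simpl; auto. }
    destruct (H U (or_introl eq_refl)) as [FU | ->].
    + exists (U :: l'); split.
      * intros V [<-|hV]; auto.
      * intros y (N & [->|hN] & Ny).
        -- left; exists N; simpl; auto.
        -- destruct (H2 y) as [(M & hM & My)|]; [exists N; auto| |auto].
           left; exists M; simpl; auto.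
    + exists l'; split; auto.
      intros y (N & [->|hN] & Ny); auto. apply H2; exists N; auto.
Qed.

Lemma compact_closed_inter (K P : set T) : compact tau K ->
  compact tau (fun y => K y /\ closure tau P y).
Proof.
  intros cK F oF cov.
  set (Z := fun y => ~ closure tau P y).
  destruct (cK (fun U => F U \/ U = Z)) as (l & Hl & cl).
  - intros U [FU | ->]; auto. apply closure_closed.
  - intros y Ky. destruct (classic (closure tau P y)) as [c|nc].
    + destruct (cov y (conj Ky c)) as (U & FU & Uy); exists U; auto.
    + exists Z; auto.
  - destruct (list_filter F Z l Hl) as (l' & H1 & H2).
    exists l'; split; auto. intros y [Ky cy].
    destruct (H2 y (cl y Ky)) as [h|h]; [exact h| contradiction].
Qed.

Definition contf (f : T -> T) := forall W, is_open tau W -> is_open tau (fun y => W (f y)).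

Lemma pull_list (f : T -> T) (F : set (set T)) (l : list (set T)) :
  (forall V, In V l -> exists W, F W /\ V = (fun y => W (f y))) ->
  exists l', (forall W, In W l' -> F W) /\ forall z, lunion l z -> lunion l' (f z).
Proof.
  induction l as [|V l IH]; intro H.
  - exists []; split; [intros _ []|]. intros z (N & [] & _).
  - destruct IH as (l' & H1 & H2). { intros; apply H; simpl; auto. }
    destruct (H V (or_introl eq_refl)) as (W & FW & ->).
    exists (W :: l'); split. intros W' [<-|h]; auto.
    intros z (N & [<-|hN] & Nz).
    + exists W; simpl; auto.
    + destruct (H2 z) as (M & hM & Mz). exists N; auto. exists M; simpl; auto.
Qed.

Lemma compact_preimage (f g : T -> T) (K : set T) :
  contf g -> (forall y, f (g y) = y) -> (forall y, g (f y) = y) -> compact tau K -> compact tau (fun y => K (f y)).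
Proof.
  intros cg fg gf cK F oF cov.
  destruct (cK (fun V => exists W, F W /\ V = (fun y => W (g y)))) as (l & Hl & cl).
  - intros V (W & FW & ->). apply cg; auto.
  - intros y Ky. destruct (cov (g y)) as (W & FW & Wy). rewrite fg; auto.
    exists (fun y => W (g y)); split; eauto.
  - destruct (pull_list g F l Hl) as (l' & H1 & H2).
    exists l'; split; auto. intros y Ky. specialize (H2 (f y) (cl _ Ky)).
    rewrite gf in H2; exact H2.
Qed.

End Gen.


Lemma countable_sub {X} (A B : set X) : countable A -> subset B A -> countable B.
Proof. intros [f hf] s; exists f; intros; apply hf; auto. Qed.

Lemma countable_image {X Y} (A : set X) (g : X -> Y) :
  countable A -> countable (fun b => exists a, A a /\ b = g a).
Proof.
  intros [f hf].
  exists (fun b => match excluded_middle_informative (exists a, A a /\ b = g a) with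
                   | left H => f (proj1_sig (constructive_indefinite_description _ H))
                   | right _ => 0 end).
  intros x y hx hy.
  destruct (excluded_middle_informative (exists a, A a /\ x = g a)) as [Hx|]; [|contradiction].
  destruct (excluded_middle_informative (exists a, A a /\ y = g a)) as [Hy|]; [|contradiction].
  destruct (constructive_indefinite_description _ Hx) as [a [Aa ea]].
  destruct (constructive_indefinite_description _ Hy) as [b [Ab eb]]. simpl.
  intro E. rewrite ea, eb, (hf a b Aa Ab E). reflexivity.
Qed.

Lemma countable_prod {X Y} (A : set X) (B : set Y) :
  countable A -> countable B -> countable (fun p : X * Y => A (fst p) /\ B (snd p)).
Proof.
  intros [f hf] [g hg]. exists (fun p => to_nat (f (fst p), g (snd p))).
  cbv beta.
  intros [a b] [c d] [h1 h2] [h3 h4] E. unfold fst, snd in *.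
  pose proof (cancel_of_to (f a, g b)) as C1. pose proof (cancel_of_to (f c, g d)) as C2.
  rewrite E, C2 in C1. injection C1 as E1 E2.
  rewrite (hf a c h1 h3 (eq_sym E1)), (hg b d h2 h4 (eq_sym E2)). reflexivity.
Qed.


Section Fwd.
Context {T : Type} (tau : topology T).

Definition PU (Nf : set (set T)) : set (set T) :=
  fun S => exists p, (Nf (fst p) /\ Nf (snd p)) /\ S = (fun y => fst p y \/ snd p y).

Lemma PU_countable Nf : countable Nf -> countable (PU Nf).
Proof.
  intro c. apply (countable_image (fun p : set T * set T => Nf (fst p) /\ Nf (snd p))
                     (fun p => fun y => fst p y \/ snd p y)).
  apply countable_prod; auto.
Qed.

Lemma net_sep (x0 : T) Nf : countable Nf -> network tau Nf -> separable tau.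
Proof.
  intros c hn.
  pose (pick := fun N : set T => epsilon (inhabits x0) N).
  exists (fun b => exists N, (Nf N /\ exists z, N z) /\ b = pick N). split.
  - apply countable_image. apply (countable_sub Nf _ c). intros N [h _]; auto.
  - intros x U oU Ux. destruct (hn x U oU Ux) as (N & NN & Nx & sub).
    exists (pick N). split.
    + apply sub. apply (epsilon_spec (inhabits x0) N). eauto.
    + exists N; split; eauto.
Qed.

Lemma net_cn Nf x : network tau Nf -> cn_network_at tau (PU Nf) x.
Proof.
  intros hn O (U & oU & Ux & sUO).
  exists U; split; auto; split; auto. intros y Uy.
  destruct (hn x U oU Ux) as (N1 & h1 & N1x & s1).
  destruct (hn y U oU Uy) as (N2 & h2 & N2y & s2).
  exists (fun z => N1 z \/ N2 z). split.
  - exists (N1, N2); simpl; auto.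
  - split; [left; auto|]. split; [|right; auto].
    intros z [h|h]; apply sUO; auto.
Qed.

Lemma compact_single x : compact tau (fun y => y = x).
Proof.
  intros F oF cov. destruct (cov x eq_refl) as (U & FU & Ux).
  exists [U]; split. intros V [<-|[]]; auto.
  intros y ->. exists U; simpl; auto.
Qed.

Lemma compact_add x K : compact tau K -> compact tau (fun y => K y \/ y = x).
Proof.
  intros cK F oF cov.
  destruct (cK F oF) as (l & hl & cl). { intros y Ky; apply cov; auto. }
  destruct (cov x (or_intror eq_refl)) as (U & FU & Ux).
  exists (U :: l); split. intros V [<-|h]; auto.
  intros y [Ky| ->]. destruct (cl y Ky) as (V & hV & Vy). exists V; simpl; auto.
  exists U; simpl; auto.
Qed.

Lemma knet_net Nf : k_network tau Nf -> network tau Nf.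
Proof.
  intros hk x U oU Ux.
  destruct (hk (fun y => y = x) U (compact_single x) oU) as (l & hl & c1 & c2).
  intros y ->; auto.
  destruct (c1 x eq_refl) as (N & hN & Nx). exists N; split; auto; split; auto.
  intros y Ny; apply c2; exists N; auto.
Qed.

Lemma knet_ck Nf x : k_network tau Nf -> ck_network_at tau (PU Nf) x.
Proof.
  intros hk O (U & oU & Ux & sUO). exists U; split. apply nbhd_open; auto.
  intros K cK sKU.
  destruct (hk (fun y => K y \/ y = x) U (compact_add x K cK) oU) as (l & hl & c1 & c2).
  intros y [h| ->]; auto.
  destruct (c1 x (or_intror eq_refl)) as (N0 & hN0 & N0x).
  exists (map (fun N y => N y \/ N0 y) l). split; [|split; [|split]].
  - intros S hS. apply in_map_iff in hS as (N & <- & hN).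
    exists (N, N0); simpl; auto.
  - intros S hS. apply in_map_iff in hS as (N & <- & hN). right; auto.
  - intros y Ky. destruct (c1 y (or_introl Ky)) as (N & hN & Ny).
    exists (fun y => N y \/ N0 y); split; auto. apply in_map_iff; eauto.
  - intros y (S & hS & Sy). apply in_map_iff in hS as (N & <- & hN).
    apply sUO, c2. destruct Sy as [h|h]; [exists N|exists N0]; auto.
Qed.

Lemma cp_net Nf : (forall x, cp_network_at tau Nf x) -> network tau Nf.
Proof.
  intros hc x U oU Ux. destruct (hc x) as [h _]. apply h, nbhd_open; auto.
Qed.

End Fwd.


Section Grp.
Context {T : Type} (tau : topology T) (G : topological_group tau).
Local Notation m := (gmul G).
Local Notation i := (ginv G).
Local Notation e := (gone G).

Lemma A1 a y : m (i a) (m a y) = y.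
Proof. rewrite gmulA, gmulVl, gmul1l; auto. Qed.
Lemma mulV x : m x (i x) = e.
Proof.
  transitivity (m (i (i x)) (m (i x) (m x (i x)))). { symmetry; apply A1. }
  rewrite (gmulA G (i x) x), gmulVl, gmul1l. apply gmulVl.
Qed.
Lemma mul1r x : m x e = x.
Proof. rewrite <- (gmulVl G x), gmulA, mulV, gmul1l; auto. Qed.
Lemma A2 a y : m a (m (i a) y) = y.
Proof. rewrite gmulA, mulV, gmul1l; auto. Qed.
Lemma invK x : i (i x) = x.
Proof.
  transitivity (m (i (i x)) (m (i x) x)). rewrite gmulVl, mul1r; auto. apply A1.
Qed.
Lemma inv1 : i e = e.
Proof. rewrite <- (mul1r (i e)). apply gmulVl. Qed.
Lemma invM a b : i (m a b) = m (i b) (i a).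
Proof.
  rewrite <- (A1 (m a b) (m (i b) (i a))).
  rewrite <- (gmulA G a b), (gmulA G b (i b)), mulV, gmul1l, mulV, mul1r. auto.
Qed.
Lemma key' x d y : m x (m (m (i x) d) (m (i d) y)) = y.
Proof. rewrite <- (gmulA G (i x) d), A2, A2. auto. Qed.
Lemma key x d y : m x (m (i (m (i d) x)) (m (i d) y)) = y.
Proof. rewrite invM, invK. apply key'. Qed.

Lemma open_lmul a W : is_open tau W -> is_open tau (fun y => W (m a y)).
Proof.
  intro oW. apply open_of_pts. intros y Wy.
  destruct (gmul_cont G a y W oW Wy) as (U & V & oU & oV & Ua & Vy & h).
  exists V; repeat split; auto. intros z Vz; apply h; auto.
Qed.
Lemma open_rmul a W : is_open tau W -> is_open tau (fun y => W (m y a)).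
Proof.
  intro oW. apply open_of_pts. intros y Wy.
  destruct (gmul_cont G y a W oW Wy) as (U & V & oU & oV & Uy & Va & h).
  exists U; repeat split; auto. intros z Uz; apply h; auto.
Qed.
Lemma open_inv W : is_open tau W -> is_open tau (fun y => W (i y)).
Proof. apply ginv_cont. Qed.

Lemma L1 x U : is_open tau U -> U x -> exists W, is_open tau W /\ W e /\
  forall w1 w2, W w1 -> W w2 -> U (m x (m (i w1) w2)).
Proof.
  intros oU Ux.
  assert (H : (fun z => U (m x z)) (m (i e) e)). { simpl. rewrite gmulVl, mul1r; auto. }
  destruct (gmul_cont G (i e) e _ (open_lmul x U oU) H) as (A & B & oA & oB & Ae & Be & h).
  exists (fun w => A (i w) /\ B w). split; [|split].
  - apply open_inter; auto. apply open_inv; auto.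
  - auto.
  - intros w1 w2 [h1 _] [_ h2]. apply (h _ _ (h1) h2).
Qed.

Lemma L1' x U : is_open tau U -> U x -> exists W, is_open tau W /\ W e /\
  forall w1 w2 w3, W w1 -> W w2 -> W w3 -> U (m x (m (i w1) (m w2 w3))).
Proof.
  intros oU Ux. destruct (L1 x U oU Ux) as (W1 & oW1 & W1e & h1).
  assert (H : W1 (m e e)). { rewrite gmul1l; auto. }
  destruct (gmul_cont G e e W1 oW1 H) as (A & B & oA & oB & Ae & Be & h).
  exists (fun w => W1 w /\ A w /\ B w). split; [|split].
  - repeat apply open_inter; auto.
  - auto.
  - intros w1 w2 w3 (a1 & _ & _) (_ & a2 & _) (_ & _ & a3). apply h1; auto.
Qed.

Lemma group_regular : regular tau.
Proof.
  intros x U oU Ux. destruct (L1 x U oU Ux) as (W & oW & We & h).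
  exists (fun y => W (i (m (i x) y))). split; [|split].
  - apply (open_lmul (i x) (fun z => W (i z))), open_inv; auto.
  - rewrite gmulVl, inv1; auto.
  - intros y cy.
    assert (oS : is_open tau (fun z => W (m (i z) y))).
    { apply (open_inv (fun z => W (m z y))), open_rmul; auto. }
    destruct (cy _ oS) as (z & Sz & Vz). { simpl; rewrite gmulVl; auto. }
    specialize (h _ _ Vz Sz). rewrite invK, key' in h. exact h.
Qed.

Lemma L2 D x M0 : dense tau D -> is_open tau M0 -> M0 e -> exists d, D d /\ M0 (m (i d) x).
Proof.
  intros dD oM Me.
  destruct (dD x (fun z => M0 (m (i z) x))) as (d & Md & Dd).
  - apply (open_inv (fun z => M0 (m z x))), open_rmul; auto.
  - rewrite gmulVl; auto.
  - eauto.
Qed.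

Definition TF (D : set T) (Nf : set (set T)) : set (set T) :=
  fun S => exists p, (D (fst p) /\ Nf (snd p)) /\ S = (fun y => snd p (m (i (fst p)) y)).

Lemma TF_countable D Nf : countable D -> countable Nf -> countable (TF D Nf).
Proof.
  intros c1 c2. apply (countable_image (fun p : T * set T => D (fst p) /\ Nf (snd p))
     (fun p => fun y => snd p (m (i (fst p)) y))). apply countable_prod; auto.
Qed.

Lemma TF_mem D Nf d N : D d -> Nf N -> TF D Nf (fun y => N (m (i d) y)).
Proof. intros; exists (d, N); simpl; auto. Qed.

Lemma cn_conv D Nf : dense tau D -> cn_network_at tau Nf e -> network tau (TF D Nf).
Proof.
  intros dD hc x U oU Ux. destruct (L1 x U oU Ux) as (W & oW & We & h).
  destruct (hc W (nbhd_open tau W e oW We)) as (M0 & oM & Me & sM).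
  destruct (L2 D x M0 dD oM Me) as (d & Dd & Md).
  destruct (sM _ Md) as (N & NN & Ne & sNW & Nx).
  exists (fun y => N (m (i d) y)). split; [apply TF_mem; auto|split; auto].
  intros y Ny. rewrite <- (key x d y). apply h; apply sNW; auto.
Qed.


Lemma L3 D Nf : dense tau D -> ck_network_at tau Nf e ->
  forall x U, is_open tau U -> U x -> exists Q, is_open tau Q /\ Q x /\
   forall C, compact tau C -> subset C Q -> exists l, (forall N, In N l -> TF D Nf N) /\
     subset C (lunion l) /\ subset (lunion l) U.
Proof.
  intros dD hck x U oU Ux.
  assert (H : (fun z => U (m x z)) (m e e)). { simpl. rewrite gmul1l, mul1r; auto. }
  destruct (gmul_cont G e e _ (open_lmul x U oU) H) as (A & B & oA & oB & Ae & Be & hAB).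
  set (O := fun z => A z /\ B z).
  assert (oO : is_open tau O) by (apply open_inter; auto).
  destruct (hck O (nbhd_open tau O e oO (conj Ae Be))) as (V & (V0 & oV0 & V0e & sV0) & hV).
  destruct (L1 e V0 oV0 V0e) as (W & oW & We & hW).
  set (R := fun z => W z /\ O z).
  assert (oR : is_open tau R) by (apply open_inter; auto).
  exists (fun y => R (m (i x) y)). split; [|split].
  - apply (open_lmul (i x) R); auto.
  - rewrite gmulVl. split; auto. split; auto.
  - intros C cC sCQ.
    destruct (dD x _ (open_lmul (i x) R oR)) as (d & Qd & Dd).
    { rewrite gmulVl. split; auto. split; auto. }
    assert (cC' : compact tau (fun y => C (m d y))).
    { apply (compact_preimage tau (m d) (m (i d))); auto.
      - intros W' oW'. apply open_lmul; auto.
      - intro; apply A2.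
      - intro; apply A1. }
    destruct (hV _ cC') as (l & hl1 & hl2 & hl3 & hl4).
    { intros y Cy. apply sV0. destruct (sCQ _ Cy) as [Wy _]. destruct Qd as [Wd _].
      specialize (hW _ _ Wd Wy). rewrite gmul1l, invM, invK in hW.
      rewrite <- (gmulA G (i d) x), A2, A1 in hW. exact hW. }
    exists (map (fun N y => N (m (i d) y)) l). split; [|split].
    + intros S hS. apply in_map_iff in hS as (N & <- & hN). apply TF_mem; auto.
    + intros c Cc. destruct (hl3 (m (i d) c)) as (N & hN & Nc).
      { rewrite A2; auto. }
      exists (fun y => N (m (i d) y)); split; auto. apply in_map_iff; eauto.
    + intros y (S & hS & Sy). apply in_map_iff in hS as (N & <- & hN).
      assert (Oy : O (m (i d) y)) by (apply hl4; exists N; auto).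
      destruct Qd as [_ [Ar Br]]. destruct Oy as [Ay By].
      specialize (hAB _ _ Ar By). rewrite key' in hAB. exact hAB.
Qed.

Lemma ck_conv D Nf : dense tau D -> ck_network_at tau Nf e -> k_network tau (TF D Nf).
Proof.
  intros dD hck K U cK oU sKU.
  set (F := fun P => is_open tau P /\ forall C, compact tau C -> subset C (closure tau P) ->
     exists l, (forall N, In N l -> TF D Nf N) /\ subset C (lunion l) /\ subset (lunion l) U).
  destruct (cK F) as (lP & hlP & cl).
  - intros P [h _]; auto.
  - intros x Kx. destruct (L3 D Nf dD hck x U oU (sKU x Kx)) as (Q & oQ & Qx & hQ).
    destruct (group_regular x Q oQ Qx) as (P & oP & Px & sP).
    exists P; split; auto. split; auto. intros C cC sC. apply hQ; auto.
    intros y Cy; apply sP, sC; auto.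
  - assert (IH : forall lP, (forall P, In P lP -> F P) -> exists l,
       (forall N, In N l -> TF D Nf N) /\ subset (fun y => K y /\ lunion lP y) (lunion l)
       /\ subset (lunion l) U).
    { induction lP0 as [|P lP0 IH]; intro hF.
      - exists []; split; [intros _ []|split]; intros y H.
        + destruct H as [_ (N & [] & _)].
        + destruct H as (N & [] & _).
      - destruct IH as (l2 & a2 & b2 & c2). { intros; apply hF; simpl; auto. }
        destruct (hF P (or_introl eq_refl)) as [oP hP].
        destruct (hP (fun y => K y /\ closure tau P y)) as (l1 & a1 & b1 & c1).
        { apply compact_closed_inter; auto. }
        { intros y [_ h]; auto. }
        exists (l1 ++ l2). split; [|split].
        + intros N hN. apply in_app_iff in hN as [h|h]; auto.
        + intros y [Ky (N & [<-|hN] & Ny)].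
          * destruct (b1 y) as (M & hM & My). split; auto. apply closure_sub; auto.
            exists M; split; auto. apply in_app_iff; auto.
          * destruct (b2 y) as (M & hM & My). split; auto. exists N; auto.
            exists M; split; auto. apply in_app_iff; auto.
        + intros y (N & hN & Ny). apply in_app_iff in hN as [h|h].
          * apply c1; exists N; auto.
          * apply c2; exists N; auto. }
    destruct (IH lP hlP) as (l & a & b & c). exists l; split; auto. split; auto.
    intros y Ky. apply b; split; auto. exact (cl y Ky).
Qed.

Definition pr (N1 N2 : set T) : set T := fun z => exists a b, N1 a /\ N2 b /\ z = m a b.
Definition PR (Nf : set (set T)) : set (set T) :=
  fun P => exists q, (Nf (fst q) /\ Nf (snd q)) /\ P = pr (fst q) (snd q).

Lemma PR_countable Nf : countable Nf -> countable (PR Nf).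
Proof.
  intro c. apply (countable_image (fun q : set T * set T => Nf (fst q) /\ Nf (snd q))
     (fun q => pr (fst q) (snd q))). apply countable_prod; auto.
Qed.

Lemma L4 D Nf : dense tau D -> cp_network_at tau Nf e -> forall x W, is_open tau W -> W e ->
  exists d N, D d /\ Nf N /\ N e /\ subset N W /\ N (m (i d) x).
Proof.
  intros dD [hc1 hc2] x W oW We.
  set (B := fun z => (exists d, D d /\ z = m (i d) x) /\ z <> e).
  destruct (classic (closure tau B e)) as [c|nc].
  - destruct (hc2 B c (fun h => proj2 h eq_refl) W (nbhd_open tau W e oW We))
      as (N & NN & Ne & sN & inf).
    destruct (classic (exists y, N y /\ B y)) as [(y & Ny & (d & Dd & ->) & _)|none].
    + exists d, N; auto.
    + exfalso; apply inf. exists []. intros y hy; apply none; eauto.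
  - unfold closure in nc. apply not_all_ex_not in nc as [U hU].
    apply imply_to_and in hU as [oU hU]. apply imply_to_and in hU as [Ue hU].
    destruct (L2 D x U dD oU Ue) as (d & Dd & Ud).
    assert (E : m (i d) x = e).
    { apply NNPP; intro ne. apply hU. exists (m (i d) x); split; auto.
      split; eauto. }
    destruct (hc1 W (nbhd_open tau W e oW We)) as (N & NN & Ne & sN).
    exists d, N; repeat split; auto. rewrite E; auto.
Qed.

Lemma cp_conv D Nf : dense tau D -> cp_network_at tau Nf e ->
  forall x, cp_network_at tau (TF D (PR Nf)) x.
Proof.
  intros dD hc x.
  assert (core : forall U0, is_open tau U0 -> U0 x -> exists W, is_open tau W /\ W e /\
     forall N2, Nf N2 -> N2 e -> subset N2 W ->
     exists d N1, D d /\ Nf N1 /\ N1 (m (i d) x) /\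
      TF D (PR Nf) (fun y => pr N1 N2 (m (i d) y)) /\ pr N1 N2 (m (i d) x) /\
      subset (fun y => pr N1 N2 (m (i d) y)) U0).
  { intros U0 oU0 U0x. destruct (L1' x U0 oU0 U0x) as (W & oW & We & hW).
    exists W; split; auto; split; auto. intros N2 NN2 N2e sN2.
    destruct (L4 D Nf dD hc x W oW We) as (d & N1 & Dd & NN1 & N1e & sN1 & N1x).
    exists d, N1. split; auto; split; auto; split; auto; split; [|split].
    - exists (d, pr N1 N2); simpl; split; auto. split; auto. exists (N1, N2); simpl; auto.
    - exists (m (i d) x), e. split; auto; split; auto. symmetry; apply mul1r.
    - intros y (a & b & Na & Nb & E).
      specialize (hW _ _ _ (sN1 _ N1x) (sN1 _ Na) (sN2 _ Nb)).
      rewrite <- E, key in hW. exact hW. }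
  split.
  - intros O (U0 & oU0 & U0x & sU0). destruct (core U0 oU0 U0x) as (W & oW & We & hW).
    destruct hc as [hc1 _]. destruct (hc1 W (nbhd_open tau W e oW We)) as (N2 & NN2 & N2e & sN2).
    destruct (hW N2 NN2 N2e sN2) as (d & N1 & Dd & NN1 & N1x & hT & hx & hs).
    eexists; split; [exact hT|split; [exact hx|]]. intros y hy; apply sU0, hs, hy.
  - intros A cA nA O (U0 & oU0 & U0x & sU0). destruct (core U0 oU0 U0x) as (W & oW & We & hW).
    set (B := fun z => A (m x z)).
    assert (cB : closure tau B e).
    { intros V oV Ve. destruct (cA (fun y => V (m (i x) y))) as (y & Vy & Ay).
      - apply (open_lmul (i x) V); auto.
      - rewrite gmulVl; auto.
      - exists (m (i x) y); split; auto. unfold B; rewrite A2; auto. }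
    assert (nB : ~ B e) by (unfold B; rewrite mul1r; auto).
    destruct hc as [_ hc2].
    destruct (hc2 B cB nB W (nbhd_open tau W e oW We)) as (N2 & NN2 & N2e & sN2 & inf).
    destruct (hW N2 NN2 N2e sN2) as (d & N1 & Dd & NN1 & N1x & hT & hx & hs).
    eexists; split; [exact hT|split; [exact hx|split]].
    + intros y hy; apply sU0, hs, hy.
    + intros [l hl]. apply inf. exists (map (m (i x)) l).
      intros z [N2z Bz]. apply in_map_iff. exists (m x z). split; [apply A1|].
      apply hl. split; [|exact Bz].
      exists (m (i d) x), z. split; auto; split; auto. apply gmulA.
Qed.

End Grp.


Theorem mainTheorem1 (T : Type) (tau : topology T) (G : topological_group tau)
  (HT2 : hausdorff tau) :
  (cosmic tau <-> separable tau /\ countable_cn_character tau) /\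
  (aleph0_space tau <-> separable tau /\ countable_ck_character tau) /\
  (P0_space tau <-> separable tau /\ countable_cp_character tau).
Proof.
  split; [|split]; split.
  - intros [_ (Nf & c & n)]. split. apply (net_sep tau (gone G) Nf c n).
    intro x. exists (PU Nf); split. apply PU_countable; auto. apply net_cn; auto.
  - intros [(D & cD & dD) hcn]. split. apply (group_regular tau G).
    destruct (hcn (gone G)) as (Nf & c & h).
    exists (TF tau G D Nf); split. apply TF_countable; auto. apply cn_conv; auto.
  - intros [_ (Nf & c & k)]. split. apply (net_sep tau (gone G) Nf c (knet_net tau Nf k)).
    intro x. exists (PU Nf); split. apply PU_countable; auto. apply knet_ck; auto.
  - intros [(D & cD & dD) hck]. split. apply (group_regular tau G).
    destruct (hck (gone G)) as (Nf & c & h).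
    exists (TF tau G D Nf); split. apply TF_countable; auto. apply ck_conv; auto.
  - intros [_ (Nf & c & h)]. split. apply (net_sep tau (gone G) Nf c (cp_net tau Nf h)).
    intro x. exists Nf; split; auto.
  - intros [(D & cD & dD) hcp]. split. apply (group_regular tau G).
    destruct (hcp (gone G)) as (Nf & c & h).
    exists (TF tau G D (PR tau G Nf)); split.
    apply TF_countable; auto. apply PR_countable; auto. apply cp_conv; auto.
Qed.
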